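(* Let $k\ge3$, $\ell\ge2$ and let $G=\mathrm{Sym}(k)\wr\mathrm{Sym}(\ell)$ act in product action on $[k]^\ell$, where $[k]=\{1,\dots,k\}$. Then $G$ contains quasi-semiregular elements. Moreover, if $g\in G$ is a quasi-semiregular element of prime order, then $g$ lies in the base group, $g=(h_1,\dots,h_\ell)\in\mathrm{Sym}(k)^\ell$, and each $h_i$ is a quasi-semiregular permutation of $[k]$.
   Context: Product action: $(h_1,\dots,h_\ell)\in\mathrm{Sym}(k)^\ell$ maps $(\alpha_1,\dots,\alpha_\ell)\mapsto(\alpha_1^{h_1},\dots,\alpha_\ell^{h_\ell})$ and $\sigma\in\mathrm{Sym}(\ell)$ maps $(\alpha_1,\dots,\alpha_\ell)\mapsto(\alpha_{1\sigma^{-1}},\dots,\alpha_{\ell\sigma^{-1}})$. A permutation $g$ is quasi-semiregular if $\langle g\rangle$ has a unique fixed point and acts semiregularly (only the identity fixes a point) on the remaining points. *)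

(* Defs.v *)
From mathcomp Require Import all_boot all_fingroup.
Set Implicit Arguments. Unset Strict Implicit. Unset Printing Implicit Defensive.
Local Open Scope group_scope.

Definition quasi_semiregular (T : finType) (g : {perm T}) : Prop :=
  exists x : T,
    (forall y : T, (forall a, a \in <[g]> -> a y = y) <-> y = x) /\
    (forall y : T, y <> x -> forall a, a \in <[g]> -> a y = y -> a = 1).

(* Product action of (h, s) in Sym(k)^l x| Sym(l) on [k]^l = {ffun 'I_l -> 'I_k}:
   alpha^{h s} = (alpha^h)^s, i.e. coordinate i of the image is
   h_{i s^-1} (alpha_{i s^-1}). *)
Definition prod_fun (k l : nat) (h : {ffun 'I_l -> {perm 'I_k}}) (s : {perm 'I_l})
  (a : {ffun 'I_l -> 'I_k}) : {ffun 'I_l -> 'I_k} :=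
  [ffun i => h (s^-1 i) (a (s^-1 i))].

Lemma prod_fun_inj k l h s : injective (@prod_fun k l h s).
Proof.
move=> a b /ffunP E; apply/ffunP => j.
have := E (s j); rewrite !ffunE permK => /perm_inj //.
Qed.

Definition prod_perm k l h s : {perm {ffun 'I_l -> 'I_k}} :=
  perm (@prod_fun_inj k l h s).

Definition wreath_prod (k l : nat) : {set {perm {ffun 'I_l -> 'I_k}}} :=
  [set prod_perm h s | h : {ffun 'I_l -> {perm 'I_k}}, s : {perm 'I_l}].

(* Main.v *)
Require Import Defs.
From mathcomp Require Import all_boot all_fingroup all_solvable all_algebra.
Import GRing.Theory.
Set Implicit Arguments. Unset Strict Implicit. Unset Printing Implicit Defensive.
Local Open Scope group_scope.
Lemma prod_permE k l h s a i :
  @prod_perm k l h s a i = h (s^-1 i) (a (s^-1 i)).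
Proof. by rewrite permE ffunE. Qed.

Lemma prod_permM k l h s h' s' :
  @prod_perm k l h s * prod_perm h' s' =
  prod_perm [ffun m => h m * h' (s m)] (s * s').
Proof.
apply/permP => v; apply/ffunP => i.
by rewrite permM !prod_permE ffunE invMg permM permM permKV.
Qed.

Lemma prod_permX k l h s n :
  exists H, (@prod_perm k l h s) ^+ n = prod_perm H (s ^+ n).
Proof.
elim: n => [|n [H IH]].
  exists [ffun _ => 1]; apply/permP => v; apply/ffunP => i.
  by rewrite prod_permE !expg0 ffunE invg1 !perm1.
by eexists; rewrite !expgSr IH prod_permM.
Qed.

Lemma prod_perm_eq1 k l h t : @prod_perm k.+2 l h t = 1 -> t = 1.
Proof.
move=> E; apply/eqP; apply/negPn/negP => nt.
have [i Hi] : exists i, t^-1 i != i.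
  apply/existsP; rewrite -negb_forall; apply: contra nt => /forallP H.
  by apply/eqP/permP => i; rewrite perm1 -{1}(eqP (H i)) permKV.
set m := t^-1 i.
have F b : h m b = ord0.
  have := congr1 (fun g : {perm {ffun 'I_l -> 'I_k.+2}} => g [ffun q => if q == m then b else ord0] i) E.
  have Hi' : (i == m) = false by rewrite eq_sym (negbTE Hi).
  by rewrite prod_permE perm1 !ffunE eqxx Hi' => ->.
by have := F ord_max; rewrite -(F ord0) => /perm_inj.
Qed.
Lemma prod_perm1X k l h n v i :
  ((@prod_perm k l h 1) ^+ n) v i = (h i ^+ n) (v i).
Proof.
elim: n => [|n IH]; first by rewrite !expg0 !perm1.
by rewrite !expgSr !permM prod_permE invg1 perm1 IH.
Qed.

Lemma fix_cycle (T : finType) (g : {perm T}) y :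
  g y = y -> forall a, a \in <[g]> -> a y = y.
Proof.
move=> gy a /cycleP [n ->]; elim: n => [|n IH]; first by rewrite expg0 perm1.
by rewrite expgSr permM IH.
Qed.

Lemma base_qs k l h :
  quasi_semiregular (@prod_perm k l h 1) -> forall i, quasi_semiregular (h i).
Proof.
move=> [x [H1 H2]] i; exists (x i).
set g := prod_perm h 1.
have gx : forall n, (g ^+ n) x = x.
  by move=> n; apply: (proj2 (H1 x) erefl); apply: mem_cycle.
have gxm : forall n m, (h m ^+ n) (x m) = x m.
  by move=> n m; rewrite -prod_perm1X gx.
set upd := fun z => [ffun m => if m == i then z else x m].
have gupd : forall n z, (h i ^+ n) z = z -> (g ^+ n) (upd z) = upd z.
  move=> n z hz; apply/ffunP => m; rewrite prod_perm1X !ffunE.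
  by case: eqP => [->|_]; rewrite ?hz ?gxm.
split.
  move=> z; split.
    move=> hall.
    have := gupd 1%N z; rewrite !expg1 => /(_ (hall _ (cycle_id _))) gz.
    have := proj1 (H1 (upd z)) (fix_cycle gz).
    by move/(congr1 (fun f : {ffun 'I_l -> 'I_k} => f i)); rewrite ffunE eqxx.
  by move=> -> a /cycleP [n ->]; rewrite gxm.
move=> z zx a /cycleP [n ->] az.
have ux : upd z <> x.
  by move/(congr1 (fun f : {ffun 'I_l -> 'I_k} => f i)); rewrite ffunE eqxx.
have g1 := H2 _ ux _ (mem_cycle g n) (gupd n z az).
apply/permP => c; rewrite perm1.
have := prod_perm1X h n (upd c) i; rewrite -/g g1 perm1 !ffunE eqxx.
by move=> <-.
Qed.

Lemma in_base k l h s :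
  prime #[@prod_perm k.+2 l h s] -> quasi_semiregular (prod_perm h s) -> s = 1.
Proof.
set g := prod_perm h s; set p := #[g] => pr [x [H1 H2]].
have pp : (0 < p)%N := prime_gt0 pr.
have gp : g ^+ p = 1 := expg_order g.
have sp : s ^+ p = 1.
  have [H E] := prod_permX h s p; apply: (prod_perm_eq1 (h := H)).
  by rewrite -E.
apply/eqP; apply/negPn/negP => ns.
have [j sj] : exists j, s j != j.
  apply/existsP; rewrite -negb_forall; apply: contra ns => /forallP H.
  by apply/eqP/permP => i; rewrite perm1; apply/eqP/H.
have D : forall d, (s ^+ d) j = j -> (p %| d)%N.
  move=> d sd; apply/negPn/negP => nd.
  have os : #[s] = p.
    apply/(prime_nt_dvdP pr); first by rewrite order_eq1.
    by rewrite order_dvdn sp.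
  have cop : coprime #[s] d by rewrite os prime_coprime.
  move: cop; rewrite -generator_coprime /generator => /eqP E.
  have := fix_cycle sd; rewrite -E => /(_ s (cycle_id s)) sj'.
  by rewrite sj' eqxx in sj.
have C0 : forall t t', (t <= t')%N -> (s ^+ t) j = (s ^+ t') j -> g ^+ t = g ^+ t'.
  move=> t t' le e; rewrite -(subnKC le) expgnDr.
  have : (s ^+ (t' - t)) j = j.
    apply: (@perm_inj _ (s ^+ t)); rewrite -permM -expgnDr subnK // e.
  move/D => dv; rewrite -(expg_mod (t' - t) gp) (eqP dv) expg0 mulg1 //.
have C : forall t t', (s ^+ t) j = (s ^+ t') j -> g ^+ t = g ^+ t'.
  move=> t t' e; case/orP: (leq_total t t') => le; first exact: C0.
  by symmetry; apply: C0.
pose a : 'I_k.+2 := if x j == ord0 then ord_max else ord0.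
have ax : a != x j.
  by rewrite /a; case: (x j =P ord0) => [->|/eqP ne] //; rewrite eq_sym.
pose w := [ffun m => if m == j then a else x m].
pose y := [ffun i => if [pick t : 'I_p | (s ^+ t) j == i] is Some t
                    then (g ^+ t) w i else x i].
have yE1 : forall i t, (s ^+ t) j = i -> y i = (g ^+ t) w i.
  move=> i t e; rewrite /y ffunE; case: pickP => [t0 /eqP e0 | n0].
    by rewrite (C t0 t) // e0 e.
  by have := n0 (Ordinal (ltn_pmod t pp)); rewrite /= expg_mod // e eqxx.
have yE0 : forall i, (forall t, (s ^+ t) j != i) -> y i = x i.
  by move=> i n; rewrite /y ffunE; case: pickP => // t0; rewrite (negbTE (n t0)).
have gSn : forall n v i, (g ^+ n.+1) v i = h (s^-1 i) ((g ^+ n) v (s^-1 i)).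
  by move=> n v i; rewrite expgSr permM prod_permE.
have gx : g x = x by apply: (proj2 (H1 x) erefl); apply: cycle_id.
have sinv : s ^+ p.-1 = s^-1.
  by rewrite -(mulgK s (s ^+ p.-1)) -expgSr prednK // sp mul1g.
have gy : g y = y.
  apply/ffunP => i; rewrite prod_permE.
  case: (boolP [exists t : 'I_p, (s ^+ t) j == s^-1 i]) => [/existsP [t /eqP e]|].
    rewrite (yE1 _ _ e) -gSn; symmetry; apply: yE1.
    by rewrite expgSr permM e permKV.
  rewrite negb_exists => /forallP n.
  have n' : forall t, (s ^+ t) j != s^-1 i.
    move=> t; have := n (Ordinal (ltn_pmod t pp)); by rewrite /= expg_mod.
  rewrite (yE0 _ n') yE0.
    by have := congr1 (fun f : {ffun 'I_l -> 'I_k.+2} => f i) gx; rewrite prod_permE.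
  move=> t; apply/eqP => e; have := n' (t + p.-1)%N.
  by rewrite expgnDr permM e sinv eqxx.
have yx : y = x by apply: (proj1 (H1 y)); apply: fix_cycle.
have := yE1 j 0%N (perm1 j); rewrite yx expg0 perm1 /w ffunE eqxx => e.
by rewrite e eqxx in ax.
Qed.
Definition s0 k : {perm 'I_k.+2} := perm (@addrI _ (1%R : 'I_k.+2)).

Lemma s0X k n (y : 'I_k.+2) : (s0 k ^+ n) y = (n%:R + y)%R.
Proof.
elim: n => [|n IH]; first by rewrite expg0 perm1 add0r.
by rewrite expgSr permM IH permE /= addrA -mulrS.
Qed.

Definition c0 k : {perm 'I_k.+3} := lift_perm ord0 ord0 (s0 k).

Lemma c0X k n : c0 k ^+ n = lift_perm ord0 ord0 (s0 k ^+ n).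
Proof.
elim: n => [|n IH]; first by rewrite !expg0 lift_perm1.
by rewrite !expgSr IH /c0 lift_permM.
Qed.

Lemma c0_fix k n z : (c0 k ^+ n) z = z -> z != ord0 -> c0 k ^+ n = 1.
Proof.
move=> e nz; case: (unliftP ord0 z) e nz => [u ->|->]; last by rewrite eqxx.
rewrite c0X lift_perm_lift => /lift_inj; rewrite s0X.
rewrite -{2}(add0r u) => /addIr e _.
have -> : s0 k ^+ n = 1 by apply/permP => v; rewrite s0X e add0r perm1.
exact: lift_perm1.
Qed.

Lemma c0_fix1 k z : c0 k z = z -> z = ord0.
Proof.
move=> e; apply/eqP/negPn/negP => nz.
have e1 : (c0 k ^+ 1) z = z by rewrite expg1.
have := c0_fix e1 nz; rewrite expg1 => c1.
have := congr1 (fun f : {perm 'I_k.+3} => f (lift ord0 ord0)) c1.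
rewrite perm1 /c0 lift_perm_lift => /lift_inj; rewrite permE /= addr0.
by move/eqP; rewrite oner_eq0.
Qed.

Lemma exists_qs k l : exists g, g \in wreath_prod k.+3 l /\ quasi_semiregular g.
Proof.
exists (prod_perm [ffun _ => c0 k] 1); split.
  by apply/imset2P; exists [ffun _ => c0 k] (1 : {perm 'I_l}); rewrite ?inE.
set g := prod_perm _ _.
exists [ffun _ => ord0]; split.
  move=> y; split.
    move=> H; have gy := H g (cycle_id g).
    apply/ffunP => i; rewrite ffunE; apply: (@c0_fix1 k).
    have := congr1 (fun f : {ffun 'I_l -> 'I_k.+3} => f i) gy.
    by rewrite -(expg1 g) prod_perm1X ffunE expg1.
  move=> -> a /cycleP [n ->]; apply/ffunP => i.
  by rewrite prod_perm1X !ffunE c0X lift_perm_id.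
move=> y yx a /cycleP [n ->] ay.
have [i yi] : exists i, y i != ord0.
  apply/existsP; rewrite -negb_forall; apply/negP => /forallP H; apply: yx.
  by apply/ffunP => i; rewrite ffunE; apply/eqP/H.
have := congr1 (fun f : {ffun 'I_l -> 'I_k.+3} => f i) ay.
rewrite prod_perm1X ffunE => /c0_fix /(_ yi) c1.
apply/permP => v; apply/ffunP => j; by rewrite prod_perm1X ffunE c1 !perm1.
Qed.
Theorem theorem5p1 (k l : nat) (hk : 3 <= k) (hl : 2 <= l) :
  (exists g, g \in wreath_prod k l /\ quasi_semiregular g) /\
  (forall g, g \in wreath_prod k l -> quasi_semiregular g -> prime #[g] ->
     exists h : {ffun 'I_l -> {perm 'I_k}},
       g = prod_perm h 1 /\ forall i, quasi_semiregular (h i)).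
Proof.
case: k hk => [|[|[|k]]] // _.
split; first exact: exists_qs.
move=> g /imset2P [h s _ _ ->] qs pr.
have s1 := in_base pr qs.
exists h; split; first by rewrite s1.
by apply: base_qs; rewrite -s1.
Qed.
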